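(* Let $\Delta t>0$ be fixed and consider a diagonally implicit, globally stiffly accurate (GSA) $s$-stage IMEX-RK scheme that is either of type A or of type CK, applied to the isentropic Euler system on $\mathbb{T}^d$ in the time semi-discrete form below. Suppose the data at time $t^n$ are well prepared, i.e. $$\rho^n=\rho^n_{(0)}+\varepsilon^2\rho^n_{(2)},\qquad \mathbf{u}^n=\mathbf{u}^n_{(0)}+\varepsilon\mathbf{u}^n_{(1)},$$ with $\rho^n_{(0)}>0$, $\rho^n_{(2)}$, $\mathbf{u}^n_{(0)}$, $\mathbf{u}^n_{(1)}$ smooth and independent of $\varepsilon$, $\nabla\rho^n_{(0)}=0$ and $\nabla\cdot\mathbf{u}^n_{(0)}=0$, and put $\mathbf{q}^n=\rho^n\mathbf{u}^n$. Suppose that for all sufficiently small $\varepsilon>0$ the stage values $\rho^k,\mathbf{q}^k$ ($k=1,\dots,s$) exist, are positive in density, and admit expansions $$f=f_{(0)}+\varepsilon f_{(1)}+\varepsilon^2 f_{(2)}+r_\varepsilon,$$ with coefficients $f_{(i)}$ smooth and independent of $\varepsilon$ and $r_\varepsilon=o(\varepsilon^2)$ in $C^1(\mathbb{T}^d)$ as $\varepsilon\to0$ (for $f\in\{\rho^k,\mathbf{u}^k\}$, $\mathbf{u}^k=\mathbf{q}^k/\rho^k$). Then for every $k=1,\dots,s$: (i) $\rho^k_{(0)}=\rho^n_{(0)}$ (in particular spatially constant) and $\rho^k_{(1)}$ is spatially constant; (ii) $\nabla\cdot\mathbf{u}^k_{(0)}=0$. Consequently $(\rho^{n+1},\mathbf{u}^{n+1})=(\rho^s,\mathbf{u}^s)$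 is again well prepared: $\rho^{n+1}_{(0)}=\rho^n_{(0)}$ is constant and $\nabla\cdot\mathbf{u}^{n+1}_{(0)}=0$. Moreover the leading order velocity satisfies $$\mathbf{u}^{n+1}_{(0)}=\mathbf{u}^n_{(0)}-\Delta t\sum_{k=1}^s\tilde\omega_k\nabla\cdot\big(\mathbf{u}^k_{(0)}\otimes\mathbf{u}^k_{(0)}\big)-\frac{\Delta t}{\rho^n_{(0)}}\sum_{k=1}^s\omega_k\nabla p^k_{(2)},\qquad \nabla\cdot \mathbf{u}^{n+1}_{(0)}=0,$$ where $p^k_{(2)}$ denotes the $\varepsilon^2$-coefficient in the expansion of $p(\rho^k)$, i.e. the limit scheme is a time discretisation of the incompressible Euler system $\partial_t\mathbf{u}+\nabla\cdot(\mathbf{u}\otimes\mathbf{u})+\nabla \pi=0$, $\nabla\cdot\mathbf{u}=0$.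
   Context: Isentropic Euler system (scaled): $\partial_t\rho+\nabla\cdot(\rho\mathbf{u})=0$, $\partial_t(\rho\mathbf{u})+\nabla\cdot(\rho\mathbf{u}\otimes\mathbf{u})+\varepsilon^{-2}\nabla p(\rho)=0$ on the torus $\mathbb{T}^d$ (periodic boundary conditions), with $p(\rho)=\rho^\gamma$, $\gamma>0$, and Mach number parameter $\varepsilon>0$; $\mathbf{q}=\rho\mathbf{u}$. IMEX-RK scheme: real matrices $\tilde A=(\tilde a_{k,j}),A=(a_{k,j})\in\mathbb{R}^{s\times s}$ and weights $\tilde\omega,\omega\in\mathbb{R}^s$, with $\tilde a_{k,j}=0$ for $j\ge k$ and $a_{k,j}=0$ for $j>k$ (diagonally implicit). It is GSA if $\tilde a_{s,j}=\tilde\omega_j$ and $a_{s,j}=\omega_j$ for all $j$. It is of type A if $A$ is invertible (i.e. $a_{k,k}\neq0$ for all $k$), and of type CK if $s\ge2$, the first row of $A$ is zero and the lower right $(s-1)\times(s-1)$ block of $A$ is invertible. Time semi-discrete scheme: for $k=1,\dots,s$, $\rho^k=\rho^n-\Delta t\sum_{l=1}^{k}a_{k,l}\nabla\cdot\mathbf{q}^l$, $\mathbf{q}^k=\mathbf{q}^n-\Delta t\sum_{\ell=1}^{k-1}\tilde a_{k,\ell}\nabla\cdot\big(\mathbf{q}^\ell\otimes\mathbf{q}^\ell/\rho^\ell\big)-\frac{\Delta t}{\varepsilon^2}\sum_{l=1}^k a_{k,l}\nabla p(\rho^l)$, and $\rho^{n+1}=\rho^n-\Delta t\sum_k\omega_k\nabla\cdot\mathbf{q}^k$,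 $\mathbf{q}^{n+1}=\mathbf{q}^n-\Delta t\sum_k\tilde\omega_k\nabla\cdot(\mathbf{q}^k\otimes\mathbf{q}^k/\rho^k)-\frac{\Delta t}{\varepsilon^2}\sum_k\omega_k\nabla p(\rho^k)$; for a GSA scheme $(\rho^{n+1},\mathbf{q}^{n+1})=(\rho^s,\mathbf{q}^s)$. *)

(* Defs.v *)
From Stdlib Require Import Reals ClassicalEpsilon.
From mathcomp Require Import ssreflect ssrfun ssrbool eqtype ssrnat seq fintype bigop.
Set Implicit Arguments.
Unset Strict Implicit.
Open Scope R_scope.

(* A point of R^d; functions on the torus T^d = R^d / Z^d are the
   1-periodic functions on R^d (see [periodic]). *)
Definition pt (d : nat) := 'I_d -> R.

Definition shift {d} (x : pt d) (i : 'I_d) (t : R) : pt d :=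
  fun j => if j == i then x j + t else x j.

(* Partial derivative d/dx_i f (x) (meaningful when it exists). *)
Definition pd {d} (i : 'I_d) (f : pt d -> R) (x : pt d) : R :=
  epsilon (inhabits 0) (fun l => derivable_pt_lim (fun t => f (shift x i t)) 0 l).

Definition sumI (d : nat) (F : 'I_d -> R) : R := \big[Rplus/0]_(j < d) F j.
Definition sumN (m n : nat) (F : nat -> R) : R := \big[Rplus/0]_(m <= l < n) F l.

Definition div {d} (F : pt d -> 'I_d -> R) (x : pt d) : R :=
  @sumI d (fun j => pd j (fun y => F y j) x).

Definition cont {d} (f : pt d -> R) : Prop :=
  forall x eps, 0 < eps -> exists delta, 0 < delta /\
    forall y, (forall i, Rabs (y i - x i) < delta) -> Rabs (f y - f x) < eps.

Definition periodic {d} (f : pt d -> R) : Prop :=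
  forall x i, f (shift x i 1) = f x.

Fixpoint Ck {d} (k : nat) (f : pt d -> R) : Prop :=
  cont f /\
  match k with
  | O => True
  | S k' => forall i, (forall x, exists l, derivable_pt_lim (fun t => f (shift x i t)) 0 l)
                      /\ Ck k' (pd i f)
  end.

Definition smooth_T {d} (f : pt d -> R) : Prop := periodic f /\ forall k, Ck k f.

Definition small2 {d} (r : R -> pt d -> R) : Prop :=
  forall eta, 0 < eta -> exists e0, 0 < e0 /\
    forall e, 0 < e < e0 ->
      Ck 1 (r e) /\
      forall x, Rabs (r e x) <= eta * e ^ 2 /\
                forall i, Rabs (pd i (r e) x) <= eta * e ^ 2.

Definition expand2 {d} (F : R -> pt d -> R) (f0 f1 f2 : pt d -> R) : Prop :=
  smooth_T f0 /\ smooth_T f1 /\ smooth_T f2 /\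
  small2 (fun e x => F e x - f0 x - e * f1 x - e ^ 2 * f2 x).

Definition press (gamma r : R) : R := Rpower r gamma.

(* Butcher tableaux, stages indexed 0..s-1. *)
Definition DIRK (s : nat) (At A : nat -> nat -> R) : Prop :=
  forall k j, (k < s)%N -> (j < s)%N ->
    ((k <= j)%N -> At k j = 0) /\ ((k < j)%N -> A k j = 0).

Definition GSA (s : nat) (At A : nat -> nat -> R) (wt w : nat -> R) : Prop :=
  forall j, (j < s)%N -> At (s - 1)%N j = wt j /\ A (s - 1)%N j = w j.

(* type A: A invertible; A is lower triangular, so this is a_kk <> 0 *)
Definition typeA (s : nat) (A : nat -> nat -> R) : Prop :=
  forall k, (k < s)%N -> A k k <> 0.

(* type CK: s >= 2, first row of A zero, lower-right (s-1)x(s-1) block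
   invertible; that block is lower triangular, so this is a_kk <> 0, k >= 1 *)
Definition typeCK (s : nat) (A : nat -> nat -> R) : Prop :=
  (2 <= s)%N /\ (forall j, (j < s)%N -> A 0%N j = 0) /\
  (forall k, (1 <= k)%N -> (k < s)%N -> A k k <> 0).

Definition IMEX_stage {d} (gamma dt eps : R) (At A : nat -> nat -> R)
  (rhon : pt d -> R) (qn : pt d -> 'I_d -> R)
  (rho : nat -> pt d -> R) (q : nat -> pt d -> 'I_d -> R) (k : nat) : Prop :=
  (forall x, rho k x = rhon x - dt * sumN 0 k.+1 (fun l => A k l * div (q l) x)) /\
  (forall x i, q k x i =
      qn x i
      - dt * sumN 0 k (fun l => At k l *
               div (fun y j => q l y i * q l y j / rho l y) x)
      - dt / eps ^ 2 * sumN 0 k.+1 (fun l => A k l *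
               pd i (fun y => press gamma (rho l y)) x)).

(* Main.v *)
Require Import Defs.
From Stdlib Require Import Reals.
From mathcomp Require Import ssreflect ssrfun ssrbool eqtype ssrnat seq fintype bigop.
Open Scope R_scope.
From HB Require Import structures.
From Stdlib Require Import Lra Lia FunctionalExtensionality ClassicalEpsilon Classical.
From mathcomp Require Import finfun.
From mathcomp Require Import div.
Set Implicit Arguments.
Unset Strict Implicit.
Open Scope R_scope.
HB.instance Definition _ := Monoid.isComLaw.Build R 0 Rplus (fun a b c => esym (Rplus_assoc a b c)) Rplus_comm Rplus_0_l.

Definition Lim0 (g : R -> R) (l : R) := forall eta, 0 < eta ->
  exists del, 0 < del /\ forall e, 0 < e < del -> Rabs (g e - l) < eta.
Definition Ev (P : R -> Prop) := exists del, 0 < del /\ forall e, 0 < e < del -> P e.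

Lemma Ev_and {P Q} : Ev P -> Ev Q -> Ev (fun e => P e /\ Q e).
Proof.
move=> [d1 [h1 H1]] [d2 [h2 H2]]; exists (Rmin d1 d2); split.
  by apply Rmin_pos.
move=> e [he1 he2]; split; [apply H1|apply H2]; split=>//.
  by apply: Rlt_le_trans he2 (Rmin_l _ _).
by apply: Rlt_le_trans he2 (Rmin_r _ _).
Qed.

Lemma Ev_mono (P Q : R -> Prop) : (forall e, 0 < e -> P e -> Q e) -> Ev P -> Ev Q.
Proof. move=> H [d [hd Hd]]; exists d; split=>// e he; apply H; [lra|by apply Hd]. Qed.

Lemma Ev_true (P : R -> Prop) : (forall e, 0 < e -> P e) -> Ev P.
Proof. move=> H; exists 1; split; [lra|move=> e he; apply H; lra]. Qed.

Lemma lim_ext g h l : Ev (fun e => g e = h e) -> Lim0 g l -> Lim0 h l.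
Proof.
move=> E H eta heta; have [d1 [h1 H1]] := H eta heta.
have [d [hd Hd]] := Ev_and E (ex_intro _ d1 (conj h1 H1)).
exists d; split=>// e he; have [E1 E2] := Hd e he; by rewrite -E1.
Qed.

Lemma lim_const c : Lim0 (fun _ => c) c.
Proof. move=> eta he; exists 1; split; [lra|move=> e _; rewrite Rminus_diag Rabs_R0; lra]. Qed.

Lemma lim_id : Lim0 (fun e => e) 0.
Proof. move=> eta he; exists eta; split=>// e [h1 h2]; rewrite Rminus_0_r Rabs_right; lra. Qed.

Lemma lim_plus g h a b : Lim0 g a -> Lim0 h b -> Lim0 (fun e => g e + h e) (a + b).
Proof.
move=> G H eta heta.
have [d1 [h1 H1]] := G (eta/2) ltac:(lra).
have [d2 [h2 H2]] := H (eta/2) ltac:(lra).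
exists (Rmin d1 d2); split; first by apply Rmin_pos.
move=> e [he1 he2].
have := H1 e (conj he1 (Rlt_le_trans _ _ _ he2 (Rmin_l _ _))).
have := H2 e (conj he1 (Rlt_le_trans _ _ _ he2 (Rmin_r _ _))).
move=> A B.
replace (g e + h e - (a + b)) with ((g e - a) + (h e - b)) by ring.
apply: Rle_lt_trans (Rabs_triang _ _) _; lra.
Qed.

Lemma lim_mult g h a b : Lim0 g a -> Lim0 h b -> Lim0 (fun e => g e * h e) (a * b).
Proof.
move=> G H eta heta.
set M := Rabs a + Rabs b + 1.
have hM : 0 < M by rewrite /M; have := Rabs_pos a; have := Rabs_pos b; lra.
set t := Rmin 1 (eta / (2 * M)).
have ht : 0 < t by apply Rmin_pos; [lra|apply Rdiv_lt_0_compat; lra].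
have ht1 : t <= 1 by apply Rmin_l.
have ht2 : t * (2 * M) <= eta.
  have := Rmin_r 1 (eta / (2*M)); rewrite -/t => hh.
  have -> : eta = eta / (2*M) * (2*M) by field; lra.
  apply Rmult_le_compat_r; lra.
have [d1 [h1 H1]] := G t ht.
have [d2 [h2 H2]] := H t ht.
exists (Rmin d1 d2); split; first by apply Rmin_pos.
move=> e [he1 he2].
have A := H1 e (conj he1 (Rlt_le_trans _ _ _ he2 (Rmin_l _ _))).
have B := H2 e (conj he1 (Rlt_le_trans _ _ _ he2 (Rmin_r _ _))).
replace (g e * h e - a * b) with ((g e - a) * (h e - b) + (g e - a) * b + a * (h e - b)) by ring.
have X1 : Rabs ((g e - a) * (h e - b)) <= t * t.
  rewrite Rabs_mult; apply Rmult_le_compat; try apply Rabs_pos; lra.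
have X2 : Rabs ((g e - a) * b) <= t * Rabs b.
  rewrite Rabs_mult; apply Rmult_le_compat_r; [apply Rabs_pos|lra].
have X3 : Rabs (a * (h e - b)) <= Rabs a * t.
  rewrite Rabs_mult; apply Rmult_le_compat_l; [apply Rabs_pos|lra].
have X4 : t * t <= t by nra.
apply: Rle_lt_trans (Rabs_triang _ _) _.
apply: Rle_lt_trans (Rplus_le_compat_r _ _ _ (Rabs_triang _ _)) _.
have : t * (Rabs a + Rabs b + 1) < eta by rewrite -/M; nra.
lra.
Qed.

Lemma lim_scal c g a : Lim0 g a -> Lim0 (fun e => c * g e) (c * a).
Proof. move=> G; exact: lim_mult (lim_const c) G. Qed.

Lemma lim_opp g a : Lim0 g a -> Lim0 (fun e => - g e) (- a).
Proof.
move=> G; have := lim_scal (-1) G; rewrite Ropp_mult_distr_l_reverse Rmult_1_l.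
apply: lim_ext; by apply Ev_true=> e _; ring.
Qed.

Lemma lim_minus g h a b : Lim0 g a -> Lim0 h b -> Lim0 (fun e => g e - h e) (a - b).
Proof. move=> G H; exact: lim_plus G (lim_opp H). Qed.

Lemma lim_eq g a b : Lim0 g b -> a = b -> Lim0 g a.
Proof. by move=> H ->. Qed.

Lemma lim_unique g a b : Lim0 g a -> Lim0 g b -> a = b.
Proof.
move=> A B; case: (Req_dec a b) => // Hn; exfalso.
have H : 0 < Rabs (a - b) by apply Rabs_pos_lt; lra.
have [d1 [h1 H1]] := A (Rabs (a-b) / 2) ltac:(lra).
have [d2 [h2 H2]] := B (Rabs (a-b) / 2) ltac:(lra).
have he : 0 < Rmin d1 d2 by apply Rmin_pos.
have m1 := Rmin_l d1 d2; have m2 := Rmin_r d1 d2.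
have X := H1 (Rmin d1 d2 / 2) ltac:(split; lra).
have Y := H2 (Rmin d1 d2 / 2) ltac:(split; lra).
move: X Y; set e := Rmin d1 d2 / 2 => X Y.
have : Rabs (a - b) <= Rabs (g e - b) + Rabs (g e - a).
  replace (a - b) with ((g e - b) - (g e - a)) by ring.
  apply: Rle_trans (Rabs_triang _ _) _; rewrite Rabs_Ropp; lra.
lra.
Qed.

Lemma lim_ev0 g a : Ev (fun e => g e = 0) -> Lim0 g a -> a = 0.
Proof. move=> E H; apply: lim_unique H _; apply: lim_ext (lim_const 0). 
by apply: Ev_mono E => e _ ->. Qed.

Lemma lim_bound g : (exists e0, 0 < e0 /\ forall eta, 0 < eta -> exists del, 0 < del /\ forall e, 0 < e < del -> Rabs (g e) <= eta) -> Lim0 g 0.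
Proof.
move=> [_ [_ H]] eta he; have [d [hd Hd]] := H (eta/2) ltac:(lra).
exists d; split=>// e h; rewrite Rminus_0_r; have := Hd e h; lra.
Qed.

Lemma sumN_rec m n F : (m <= n)%N -> sumN m n.+1 F = sumN m n F + F n.
Proof. by move=> h; rewrite /sumN big_nat_recr. Qed.

Lemma sumN_0 n F : sumN n n F = 0.
Proof. by rewrite /sumN big_geq. Qed.

Lemma lim_sumN n (G : nat -> R -> R) (a : nat -> R) :
  (forall l, (l < n)%N -> Lim0 (G l) (a l)) ->
  Lim0 (fun e => sumN 0 n (fun l => G l e)) (sumN 0 n a).
Proof.
elim: n => [|n IH] H.
  apply: lim_ext (lim_eq (lim_const 0) (sumN_0 _ _)); apply Ev_true => e _; by rewrite sumN_0.
rewrite sumN_rec //; apply: lim_ext (lim_plus (IH _) (H n _)).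
- by apply Ev_true => e _; rewrite sumN_rec.
- by move=> l hl; apply H; apply: ltn_trans hl _.
- by [].
Qed.

Lemma sumN_ext n F G : (forall l, (l < n)%N -> F l = G l) -> sumN 0 n F = sumN 0 n G.
Proof.
move=> H; rewrite /sumN; apply: eq_big_nat => l /andP [_ h]; exact: H.
Qed.

Lemma sumN_plus n F G : sumN 0 n (fun l => F l + G l) = sumN 0 n F + sumN 0 n G.
Proof.
elim: n => [|n IH]; first by rewrite !sumN_0; ring.
by rewrite !sumN_rec // IH; ring.
Qed.

Lemma sumN_scal n c F : sumN 0 n (fun l => c * F l) = c * sumN 0 n F.
Proof.
elim: n => [|n IH]; first by rewrite !sumN_0; ring.
by rewrite !sumN_rec // IH; ring.
Qed.

Definition Dd {d} (i : 'I_d) (f : pt d -> R) (x : pt d) (l : R) :=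
  derivable_pt_lim (fun t => f (shift x i t)) 0 l.

Lemma shift0 d (x : pt d) i : shift x i 0 = x.
Proof. apply: functional_extensionality => j; rewrite /shift; case: (j == i) => //; ring. Qed.

Lemma shift_shift d (x : pt d) i a b : shift (shift x i a) i b = shift x i (a + b).
Proof.
apply: functional_extensionality => j; rewrite /shift; case: (j == i) => //; ring.
Qed.

Lemma pd_spec d i (f : pt d -> R) x : (exists l, Dd i f x l) -> Dd i f x (pd i f x).
Proof.
move=> H; rewrite /pd; apply: (epsilon_spec (inhabits 0) (fun l => derivable_pt_lim (fun t => f (shift x i t)) 0 l)).
exact H.
Qed.

Lemma pd_eq d i (f : pt d -> R) x l : Dd i f x l -> pd i f x = l.
Proof.
move=> H; have := pd_spec (ex_intro _ l H) => H2.
exact: uniqueness_limite H2 H.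
Qed.

Lemma Dd_ext d i (f g : pt d -> R) x l : (forall y, f y = g y) -> Dd i f x l -> Dd i g x l.
Proof. move=> H; have -> : f = g by apply functional_extensionality. done. Qed.

Lemma pd_ext d i (f g : pt d -> R) x : (forall y, f y = g y) -> pd i f x = pd i g x.
Proof. move=> H; have -> : f = g by apply functional_extensionality. done. Qed.

Lemma Dd_plus d i (f g : pt d -> R) x a b : Dd i f x a -> Dd i g x b ->
  Dd i (fun y => f y + g y) x (a + b).
Proof. move=> F G; exact: (derivable_pt_lim_plus _ _ _ _ _ F G). Qed.

Lemma Dd_minus d i (f g : pt d -> R) x a b : Dd i f x a -> Dd i g x b ->
  Dd i (fun y => f y - g y) x (a - b).
Proof. move=> F G; exact: (derivable_pt_lim_minus _ _ _ _ _ F G). Qed.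

Lemma Dd_mult d i (f g : pt d -> R) x a b : Dd i f x a -> Dd i g x b ->
  Dd i (fun y => f y * g y) x (a * g x + f x * b).
Proof.
move=> F G; have := derivable_pt_lim_mult _ _ _ _ _ F G.
by rewrite /Dd /= shift0.
Qed.

Lemma Dd_scal d i (f : pt d -> R) x c a : Dd i f x a -> Dd i (fun y => c * f y) x (c * a).
Proof. move=> F; exact: (derivable_pt_lim_scal _ _ _ _ F). Qed.

Lemma Dd_const d i (x : pt d) c : Dd i (fun _ => c) x 0.
Proof. exact: (derivable_pt_lim_const c 0). Qed.

Lemma Dd_line d i (f : pt d -> R) x t l : Dd i f (shift x i t) l ->
  derivable_pt_lim (fun u => f (shift x i u)) t l.
Proof.
move=> H eps he; have [del Hd] := H eps he; exists del => h h0 hd.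
have := Hd h h0 hd; by rewrite !shift_shift Rplus_0_r Rplus_0_l.
Qed.

Lemma Ck_cont d k (f : pt d -> R) : Ck k f -> cont f.
Proof. by case: k => [[]|k []]. Qed.

Lemma Ck_D d k (f : pt d -> R) : Ck k.+1 f -> forall i x, exists l, Dd i f x l.
Proof. move=> [_ H] i x; exact: ((H i).1 x). Qed.

Lemma Ck_pd d k (f : pt d -> R) : Ck k.+1 f -> forall i, Ck k (pd i f).
Proof. move=> [_ H] i; exact: (H i).2. Qed.

Lemma smooth_D d (f : pt d -> R) : smooth_T f -> forall i x, Dd i f x (pd i f x).
Proof. move=> [_ H] i x; apply pd_spec; exact: (Ck_D (H 1%N)). Qed.

Lemma smooth_DD d (f : pt d -> R) : smooth_T f -> forall i j x, Dd j (pd i f) x (pd j (pd i f) x).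
Proof. move=> [_ H] i j x; apply pd_spec; exact: (Ck_D (Ck_pd (H 2%N) i)). Qed.

Lemma line_const d i (f : pt d -> R) x : (forall t, Dd i f (shift x i t) 0) ->
  forall t, f (shift x i t) = f x.
Proof.
move=> H t.
have D : forall c, derivable_pt_lim (fun u => f (shift x i u)) c ((fun _ => 0) c).
  move=> c; exact: Dd_line (H c).
case: (Rtotal_order t 0) => [ht|[->|ht]].
- have [c [Hc _]] := MVT_cor2 (fun u => f (shift x i u)) (fun _ => 0) _ _ ht (fun c _ => D c).
  rewrite shift0 in Hc; lra.
- by rewrite shift0.
- have [c [Hc _]] := MVT_cor2 (fun u => f (shift x i u)) (fun _ => 0) _ _ ht (fun c _ => D c).
  rewrite shift0 in Hc; lra.
Qed.

Lemma grad0_const d (f : pt d -> R) : (forall i x, Dd i f x 0) -> forall x y, f x = f y.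
Proof.
move=> H x y.
pose z (m : nat) : pt d := fun j => if (j < m)%N then y j else x j.
have Z0 : z 0%N = x by apply functional_extensionality => j.
have Zd : z d = y by apply functional_extensionality => j; rewrite /z ltn_ord.
suff S : forall m, (m <= d)%N -> f (z m) = f x by rewrite -Zd S.
elim=> [|m IH] hm; first by rewrite Z0.
have hm' : (m < d)%N by [].
have E : z m.+1 = shift (z m) (Ordinal hm') (y (Ordinal hm') - x (Ordinal hm')).
  apply functional_extensionality => j; rewrite /z /shift ltnS.
  case: (ltngtP j m) => [h|h|h].
  - by rewrite ifF //; apply/negbTE; rewrite -val_eqE /= neq_ltn h.
  - by rewrite ifF //; apply/negbTE; rewrite -val_eqE /= neq_ltn h orbT.
  - have -> : j = Ordinal hm' by apply: val_inj.
    by rewrite eqxx; ring.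
rewrite E line_const; [apply IH; exact: ltnW | move=> t; exact: H].
Qed.

Lemma big_nonneg (I : finType) (F : I -> R) : (forall i, 0 <= F i) -> 0 <= \big[Rplus/0]_(i : I) F i.
Proof. move=> H; apply: (big_ind (fun x => 0 <= x)); [lra | move=> x y; lra | move=> i _; exact: H]. Qed.

Lemma big_ge_term (I : finType) (F : I -> R) i0 : (forall i, 0 <= F i) -> F i0 <= \big[Rplus/0]_(i : I) F i.
Proof.
move=> H; rewrite (bigD1 i0) //=.
have : 0 <= \big[Rplus/0]_(i | i != i0) F i.
  apply: (big_ind (fun x => 0 <= x)); [lra | move=> x y; lra | move=> i _; exact: H].
lra.
Qed.

Lemma big_le (I : finType) (F G : I -> R) : (forall i, F i <= G i) ->
  \big[Rplus/0]_(i : I) F i <= \big[Rplus/0]_(i : I) G i.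
Proof. move=> H; apply: (big_ind2 (fun x y => x <= y)); [lra | move=> *; lra | move=> i _; exact: H]. Qed.

Lemma big_abs (I : finType) (F : I -> R) :
  Rabs (\big[Rplus/0]_(i : I) F i) <= \big[Rplus/0]_(i : I) Rabs (F i).
Proof.
apply: (big_ind2 (fun x y => Rabs x <= y)); first by rewrite Rabs_R0; lra.
- move=> x1 x2 y1 y2 h1 h2; apply: Rle_trans (Rabs_triang _ _) _; lra.
- move=> i _; lra.
Qed.

Lemma big_scal (I : finType) (F : I -> R) c :
  \big[Rplus/0]_(i : I) (c * F i) = c * \big[Rplus/0]_(i : I) F i.
Proof.
apply: (big_ind2 (fun x y => x = c * y)); first by ring.
- by move=> x1 x2 y1 y2 -> ->; ring.
- by [].
Qed.

Section Bounded.
Variable d : nat.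
Variable f : pt d -> R.
Hypothesis Hf : cont f.

Definition inC (lo : pt d) (w : R) (x : pt d) := forall j, lo j <= x j <= lo j + w.
Definition Unb lo w := forall M, exists x, inC lo w x /\ M < Rabs (f x).
Definition subc (lo : pt d) w (b : {ffun 'I_d -> bool}) : pt d :=
  fun j => lo j + (if b j then w / 2 else 0).

Lemma split_unb lo w : 0 < w -> Unb lo w -> exists b, Unb (subc lo w b) (w / 2).
Proof.
move=> hw U; apply: NNPP => H.
have Hb : forall b, exists M, forall x, inC (subc lo w b) (w/2) x -> Rabs (f x) <= M.
  move=> b; apply: NNPP => H2; apply: H; exists b => M.
  apply: NNPP => H3; apply: H2; exists M => x hx; apply: Rnot_lt_le => H4.
  by apply: H3; exists x.
pose Mf b := epsilon (inhabits 0) (fun M => forall x, inC (subc lo w b) (w/2) x -> Rabs (f x) <= M).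
have HMf : forall b x, inC (subc lo w b) (w/2) x -> Rabs (f x) <= Mf b.
  move=> b; exact: (epsilon_spec (inhabits 0) _ (Hb b)).
have [x [hx hM]] := U (\big[Rplus/0]_(b : {ffun 'I_d -> bool}) Rabs (Mf b)).
pose bx : {ffun 'I_d -> bool} := [ffun j => if Rle_dec (lo j + w/2) (x j) then true else false].
have : inC (subc lo w bx) (w/2) x.
  move=> j; rewrite /subc /bx ffunE; have := hx j.
  case: Rle_dec => /= h; lra.
move/HMf => h1.
have h2 := @big_ge_term _ (fun b => Rabs (Mf b)) bx (fun b => Rabs_pos _).
have h3 := Rle_abs (Mf bx); simpl in h2.
apply: (Rlt_irrefl (Rabs (f x))); apply: Rle_lt_trans _ hM; apply: Rle_trans h1 _; apply: Rle_trans h3 _; exact: h2.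
Qed.

Definition nextC (C : pt d * R) : pt d * R :=
  epsilon (inhabits C) (fun C' => exists b, C' = (subc C.1 C.2 b, C.2 / 2) /\ Unb C'.1 C'.2).

Fixpoint seqC (n : nat) : pt d * R :=
  match n with O => (fun _ => 0, 1) | S n => nextC (seqC n) end.

Lemma bounded_cube : exists M, forall x, inC (fun _ => 0) 1 x -> Rabs (f x) <= M.
Proof.
apply: NNPP => H.
have U0 : Unb (fun _ => 0) 1.
  move=> M; apply: NNPP => H2; apply: H; exists M => x hx; apply: Rnot_lt_le => H3.
  by apply: H2; exists x.
have hs : forall C, (exists b, Unb (subc C.1 C.2 b) (C.2 / 2)) ->
   (exists b, (nextC C).1 = subc C.1 C.2 b) /\ (nextC C).2 = C.2 / 2 /\ Unb (nextC C).1 (nextC C).2.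
  move=> C [b hb]. 
  have hs : exists C', (exists b, C' = (subc C.1 C.2 b, C.2 / 2) /\ Unb C'.1 C'.2).
    by exists (subc C.1 C.2 b, C.2/2); exists b.
  have [b' [E hU]] := epsilon_spec (inhabits C) _ hs.
  rewrite /nextC E /=; split; [by exists b'|split=>//].
  by move: hU; rewrite E.
have S0 : forall n, (seqC n).2 = / 2 ^ n /\ Unb (seqC n).1 (seqC n).2.
  elim=> [|n [IH1 IH2]]; first by split=>//=; rewrite Rinv_1.
  have hp : 0 < (seqC n).2 by rewrite IH1; apply Rinv_0_lt_compat, pow_lt; lra.
  have [hA [hB hC]] := hs _ (split_unb hp IH2).
  split=>//; rewrite /= hB IH1 /=; field; apply pow_nonzero; lra.
have S : forall n, (seqC n).2 = / 2 ^ n /\ Unb (seqC n).1 (seqC n).2 /\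
   (exists b, (seqC n.+1).1 = subc (seqC n).1 (seqC n).2 b) /\ (seqC n.+1).2 = (seqC n).2 / 2.
  move=> n; have [IH1 IH2] := S0 n.
  have hp : 0 < (seqC n).2 by rewrite IH1; apply Rinv_0_lt_compat, pow_lt; lra.
  have [hA [hB hC]] := hs _ (split_unb hp IH2).
  by split=>//; split=>//; split.
have W : forall n, (seqC n).2 = / 2 ^ n by move=> n; case: (S n).
have Wp : forall n, 0 < (seqC n).2 by move=> n; rewrite W; apply Rinv_0_lt_compat, pow_lt; lra.
have Mon : forall n j, (seqC n).1 j <= (seqC n.+1).1 j /\
     (seqC n.+1).1 j + (seqC n.+1).2 <= (seqC n).1 j + (seqC n).2.
  move=> n j; have [_ [_ [[b ->] ->]]] := S n; rewrite /subc.
  have := Wp n; case: (b j); lra.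
have Mon2 : forall n m j, (n <= m)%N -> (seqC n).1 j <= (seqC m).1 j /\
     (seqC m).1 j + (seqC m).2 <= (seqC n).1 j + (seqC n).2.
  move=> n m j /subnK <-; elim: (m - n)%N => [|k [IH1 IH2]]; first by rewrite add0n; lra.
  rewrite addSn; have := Mon (k + n)%N j; lra.
have Z : forall j, {z | Un_cv (fun n => (seqC n).1 j) z}.
  move=> j; apply: growing_cv.
  - by move=> n; case: (Mon n j).
  - exists ((seqC 0).1 j + (seqC 0).2) => _ [n ->].
    have := Mon2 0%N n j isT; have := Wp n; lra.
pose z : pt d := fun j => proj1_sig (Z j).
have Zin : forall n j, (seqC n).1 j <= z j <= (seqC n).1 j + (seqC n).2.
  move=> n j; have Hc := proj2_sig (Z j); rewrite /z; set L := proj1_sig (Z j) in Hc *.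
  split.
  - apply: Rnot_lt_le => h.
    have [N HN] := Hc ((seqC n).1 j - L) ltac:(lra).
    have := HN (maxn N n) (leP (leq_maxl _ _)); rewrite /Rdist.
    have := Mon2 n (maxn N n) j (leq_maxr _ _) => [[h1 _]].
    move/Rabs_def2 => [? ?]; lra.
  - apply: Rnot_lt_le => h.
    have [N HN] := Hc (L - ((seqC n).1 j + (seqC n).2)) ltac:(lra).
    have := HN (maxn N n) (leP (leq_maxl _ _)); rewrite /Rdist.
    have := Mon2 n (maxn N n) j (leq_maxr _ _) => [[_ h1]].
    have := Wp (maxn N n).
    move=> h2 /Rabs_def2 [? ?]; lra.
have [del [hdel Hdel]] := Hf z Rlt_0_1.
have [n hn] : exists n, / 2 ^ n < del.
  have [n [hn hn0]] := archimed_cor1 del hdel.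
  exists n; apply: Rle_lt_trans hn.
  apply Rinv_le_contravar; first by apply lt_0_INR.
  try clear hn; try clear hn0; elim: n => [|n IH]; first by simpl; lra.
  rewrite S_INR /=; have : 1 <= 2 ^ n by apply: pow_R1_Rle; lra. lra.
have [_ [U _]] := S n.
have [x [hx hM]] := U (Rabs (f z) + 1).
have : Rabs (f x - f z) < 1.
  apply Hdel => j; have := W n; have := hx j; have := Zin n j => h1 h2 h3.
  apply Rabs_def1; lra.
have := Rabs_triang_inv (f x) (f z); lra.
Qed.
End Bounded.

Lemma taylor2 d (f : pt d -> R) j x h M : smooth_T f -> 0 < h ->
  (forall t, 0 <= t <= h -> Rabs (pd j (pd j f) (shift x j t)) <= M) ->
  Rabs (f (shift x j h) - f x - h * pd j f x) <= M * (h * h).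
Proof.
move=> Sf hh HM.
have D1 : forall c, derivable_pt_lim (fun u => f (shift x j u)) c (pd j f (shift x j c)).
  move=> c; apply: Dd_line; exact: smooth_D.
have D2 : forall c, derivable_pt_lim (fun u => pd j f (shift x j u)) c (pd j (pd j f) (shift x j c)).
  move=> c; apply: Dd_line; exact: smooth_DD.
have [c [Hc hc]] := MVT_cor2 _ (fun c => pd j f (shift x j c)) _ _ hh (fun c _ => D1 c).
have [c' [Hc' hc']] := MVT_cor2 _ (fun c => pd j (pd j f) (shift x j c)) _ _ (proj1 hc) (fun c _ => D2 c).
rewrite shift0 in Hc Hc'.
have -> : f (shift x j h) - f x - h * pd j f x = h * (c * pd j (pd j f) (shift x j c')).
  rewrite Hc; rewrite Rminus_0_r in Hc'; rewrite Rminus_0_r; nra.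
rewrite !Rabs_mult (Rabs_right h) ?(Rabs_right c); try lra.
have := HM c' ltac:(lra); have := Rabs_pos (pd j (pd j f) (shift x j c')).
move=> h1 h2.
have : c * Rabs (pd j (pd j f) (shift x j c')) <= h * M by apply Rmult_le_compat; lra.
nra.
Qed.

Lemma big_sub (I : finType) (F G : I -> R) :
  \big[Rplus/0]_(i : I) (F i - G i) = \big[Rplus/0]_(i : I) F i - \big[Rplus/0]_(i : I) G i.
Proof.
apply: (big_ind3 (fun x y z => x = y - z)); first by ring.
- by move=> x1 x2 x3 y1 y2 y3 -> ->; ring.
- by [].
Qed.

Lemma sumI_E d (F : 'I_d -> R) : sumI F = \big[Rplus/0]_(j : 'I_d) F j.
Proof. by []. Qed.

Section Grid.
Variable d n : nat.
Definition NN := n.+1.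
Definition gp (m : {ffun 'I_d -> 'I_NN}) : pt d := fun k => INR (m k) / INR NN.
Definition sh (j : 'I_d) (m : {ffun 'I_d -> 'I_NN}) : {ffun 'I_d -> 'I_NN} :=
  [ffun k => if k == j then ordS (m k) else m k].

Lemma sh_inj j : injective (sh j).
Proof.
move=> m1 m2 E; apply/ffunP => k; have := congr1 (fun m : {ffun 'I_d -> 'I_NN} => m k) E; rewrite /sh !ffunE.
by case: (k == j) => //; apply: ordS_inj.
Qed.

Lemma NNpos : 0 < INR NN.
Proof. by apply lt_0_INR; rewrite /NN; lia. Qed.

Lemma gp_in m j t : 0 <= t <= / INR NN -> inC (fun _ => 0) 1 (shift (gp m) j t).
Proof.
move=> ht k; rewrite /shift /gp.
have hN := NNpos.
have hm : (m k < NN)%N by apply: ltn_ord.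
have hm1 : INR (m k) + 1 <= INR NN by rewrite -S_INR; apply le_INR; apply/leP.
have h0 : 0 <= INR (m k) by apply pos_INR.
have E : INR (m k) / INR NN + t <= 1.
  have : t * INR NN <= 1 by have := Rinv_r (INR NN) ltac:(lra); nra.
  move=> h; apply (Rmult_le_reg_r (INR NN)) => //.
  rewrite Rmult_plus_distr_r /Rdiv Rmult_assoc Rinv_l; lra.
have E2 : 0 <= INR (m k) / INR NN by apply Rmult_le_pos; [lra|apply Rlt_le, Rinv_0_lt_compat; lra].
case: (k == j); lra.
Qed.

Lemma gp_sh (f : pt d -> R) j m : periodic f -> f (shift (gp m) j (/ INR NN)) = f (gp (sh j m)).
Proof.
move=> Pf; have hN := NNpos.
have hm : (m j < NN)%N by apply: ltn_ord.
case: (ltnP (m j).+1 NN) => h.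
- congr f; apply functional_extensionality => k; rewrite /shift /gp /sh ffunE.
  case: eqP => [->|] //; have -> : nat_of_ord (ordS (m j)) = (m j).+1 by rewrite /ordS /= modn_small.
  rewrite S_INR; field; lra.
- have Ej : (m j).+1 = NN by apply/eqP; rewrite eqn_leq h hm.
  rewrite -(Pf (gp (sh j m)) j); congr f.
  apply functional_extensionality => k; rewrite /shift /gp /sh ffunE.
  case: eqP => [->|] //; have -> : nat_of_ord (ordS (m j)) = 0%N by rewrite /ordS /= Ej modnn.
  have : INR (m j) + 1 = INR NN by rewrite -S_INR Ej.
  move=> h2; rewrite [INR 0]/= /Rdiv Rmult_0_l Rplus_0_l.
  rewrite -{2}(Rmult_1_l (/ INR NN)) -Rmult_plus_distr_r h2 Rinv_r //; lra.
Qed.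

Lemma sum_shift (f : pt d -> R) j : periodic f ->
  \big[Rplus/0]_(m : {ffun 'I_d -> 'I_NN}) f (shift (gp m) j (/ INR NN)) =
  \big[Rplus/0]_(m : {ffun 'I_d -> 'I_NN}) f (gp m).
Proof.
move=> Pf; rewrite [RHS](reindex_inj (@sh_inj j)) /=.
by apply: eq_bigr => m _; rewrite gp_sh.
Qed.
End Grid.

Lemma div_const d (F : pt d -> 'I_d -> R) kappa :
  (forall j, smooth_T (fun x => F x j)) -> (forall x, div F x = kappa) -> kappa = 0.
Proof.
move=> SF DF.
have Bj : forall j, exists M, forall x, inC (fun _ => 0) 1 x ->
   Rabs (pd j (pd j (fun y => F y j)) x) <= M.
  move=> j; apply: bounded_cube.
  have [_ H] := SF j; exact: (Ck_cont (Ck_pd (Ck_pd (H 2%N) j) j)).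
pose Mj j := epsilon (inhabits 0) (fun M => forall x, inC (fun _ => 0) 1 x ->
   Rabs (pd j (pd j (fun y => F y j)) x) <= M).
have HMj : forall j x, inC (fun _ => 0) 1 x -> Rabs (pd j (pd j (fun y => F y j)) x) <= Mj j.
  move=> j; exact: (epsilon_spec (inhabits 0) _ (Bj j)).
set M := \big[Rplus/0]_(j : 'I_d) Rabs (Mj j).
have HM : forall j x, inC (fun _ => 0) 1 x -> Rabs (pd j (pd j (fun y => F y j)) x) <= M.
  move=> j x hx; apply: Rle_trans (HMj j x hx) _; apply: Rle_trans (Rle_abs _) _.
  exact: (@big_ge_term _ (fun j => Rabs (Mj j)) j (fun j => Rabs_pos _)).
have M0 : 0 <= M by apply: big_nonneg => j; apply Rabs_pos.
set D := \big[Rplus/0]_(j : 'I_d) 1.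
have D0 : 0 <= D by apply: big_nonneg => j; lra.
have Key : forall n, Rabs kappa <= D * M * / INR (NN n).
  move=> n; set h := / INR (NN n).
  have hN := NNpos n.
  have hh : 0 < h by apply Rinv_0_lt_compat.
  set C := \big[Rplus/0]_(m : {ffun 'I_d -> 'I_(NN n)}) 1.
  have C1 : 1 <= C.
    exact: (@big_ge_term _ (fun _ : {ffun 'I_d -> 'I_(NN n)} => 1) [ffun => ord0] (fun _ => Rle_0_1)).
  pose E (m : {ffun 'I_d -> 'I_(NN n)}) := \big[Rplus/0]_(j : 'I_d)
     (F (shift (gp m) j h) j - F (gp m) j - h * pd j (fun y => F y j) (gp m)).
  have HE : forall m, Rabs (E m) <= D * (M * (h * h)).
    move=> m; apply: Rle_trans (big_abs _) _; rewrite /D Rmult_comm -big_scal; apply: big_le => j.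
    rewrite Rmult_1_r; apply: (@taylor2 _ (fun y => F y j)) => // t ht.
    apply: HM; exact: gp_in.
  have T : forall m, \big[Rplus/0]_(j : 'I_d) (F (shift (gp m) j h) j - F (gp m) j) = h * kappa + E m.
    move=> m; rewrite /E !big_sub big_scal -(DF (gp m)) /div sumI_E.
    have -> : \big[Rplus/0]_(j < d) pd j (fun y => F y j) (gp m) = \big[Rplus/0]_(i : 'I_d) pd i (fun y => F y i) (gp m) by [].
    ring.
  have Z : \big[Rplus/0]_(m : {ffun 'I_d -> 'I_(NN n)})
            \big[Rplus/0]_(j : 'I_d) (F (shift (gp m) j h) j - F (gp m) j) = 0.
    rewrite exchange_big /=; apply: big1 => j _; rewrite big_sub /h (@sum_shift _ _ (fun y => F y j)); first exact: Rminus_diag_eq.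
    by have [] := SF j.
  have Z1 : \big[Rplus/0]_(m : {ffun 'I_d -> 'I_(NN n)}) (h * kappa + E m) = 0.
    rewrite -[RHS]Z; apply: eq_bigr => m _; by rewrite T.
  have Z2 : h * kappa * C + \big[Rplus/0]_(m : {ffun 'I_d -> 'I_(NN n)}) E m = 0.
    rewrite -[RHS]Z1 big_split /C -big_scal /=; congr Rplus; apply: eq_bigr => m _; ring.
  have B : Rabs (\big[Rplus/0]_(m : {ffun 'I_d -> 'I_(NN n)}) E m) <= C * (D * (M * (h * h))).
    apply: Rle_trans (big_abs _) _; rewrite /C Rmult_comm -big_scal; apply: big_le => m.
    by rewrite Rmult_1_r.
  have B2 : Rabs (h * kappa * C) <= C * (D * (M * (h * h))).
    have -> : h * kappa * C = - \big[Rplus/0]_(m : {ffun 'I_d -> 'I_(NN n)}) E m by lra.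
    by rewrite Rabs_Ropp.
  rewrite !Rabs_mult (Rabs_right h) ?(Rabs_right C) in B2; try lra.
  have : h * C * Rabs kappa <= h * C * (D * M * h) by nra.
  move=> B3; apply: (Rmult_le_reg_l (h * C)); first by nra.
  lra.
case: (Req_dec kappa 0) => // hk; exfalso.
have hk' : 0 < Rabs kappa by apply Rabs_pos_lt.
have [n [hn hn0]] := archimed_cor1 (Rabs kappa / (D * M + 1)) ltac:(apply Rdiv_lt_0_compat; nra).
have := Key n; rewrite /NN S_INR => K.
have hI : / (INR n + 1) < Rabs kappa / (D * M + 1).
  apply: Rle_lt_trans hn; apply Rinv_le_contravar; [exact: lt_0_INR|lra].
have : D * M * / (INR n + 1) < Rabs kappa.
  have h1 : 0 < / (INR n + 1) by apply Rinv_0_lt_compat; have := pos_INR n; lra.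
  have : (D * M + 1) * / (INR n + 1) < Rabs kappa.
    have -> : Rabs kappa = (D * M + 1) * (Rabs kappa / (D * M + 1)) by field; nra.
    apply Rmult_lt_compat_l => //; nra.
  nra.
lra.
Qed.

Lemma lim_Q (f : R -> R) a l (rho : R -> R) : derivable_pt_lim f a l -> Lim0 rho a ->
  Lim0 (fun e => if Req_EM_T (rho e) a then l else (f (rho e) - f a) / (rho e - a)) l.
Proof.
move=> Df Hr eta heta.
have [del Hd] := Df eta heta.
have [d1 [h1 H1]] := Hr del (cond_pos del).
exists d1; split=>// e he.
case: (Req_EM_T (rho e) a) => [Heq|hne]; first by rewrite Rminus_diag Rabs_R0.
have := Hd (rho e - a) ltac:(lra) (H1 e he).
by rewrite (_ : a + (rho e - a) = rho e) //; ring.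
Qed.

Lemma lim_chain (f : R -> R) a l (rho : R -> R) b : derivable_pt_lim f a l -> Lim0 rho a ->
  Lim0 (fun e => (rho e - a) / e) b -> Lim0 (fun e => (f (rho e) - f a) / e) (l * b).
Proof.
move=> Df Hr Hb; have Q := lim_Q Df Hr.
apply: lim_ext (lim_mult Q Hb); apply: Ev_true => e he.
case: (Req_EM_T (rho e) a) => [Heq|hne].
  have E1 : f (rho e) = f a by rewrite Heq.
  rewrite /= E1 (_ : rho e - a = 0); [rewrite /Rdiv; ring | lra].
rewrite /=; field; split; lra.
Qed.

Lemma lim_cont (f : R -> R) a l (rho : R -> R) : derivable_pt_lim f a l -> Lim0 rho a ->
  Lim0 (fun e => f (rho e)) (f a).
Proof.
move=> Df Hr; have Q := lim_Q Df Hr.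
have := lim_plus (lim_const (f a)) (lim_mult Q (lim_minus Hr (lim_const a))).
rewrite Rminus_diag Rmult_0_r Rplus_0_r; apply: lim_ext; apply: Ev_true => e he.
case: (Req_EM_T (rho e) a) => [Heq|hne].
  have E1 : f (rho e) = f a by rewrite Heq.
  rewrite /= E1 (_ : rho e - a = 0); [ring | lra].
rewrite /=; field; lra.
Qed.

Lemma lim_nonneg (g : R -> R) a : Ev (fun e => 0 < g e) -> Lim0 g a -> 0 <= a.
Proof.
move=> [d [hd Hd]] H; apply: Rnot_lt_le => ha.
have [d1 [h1 H1]] := H (- a) ltac:(lra).
have m1 := Rmin_l d d1; have m2 := Rmin_r d d1; have m0 : 0 < Rmin d d1 by apply Rmin_pos.
have := H1 (Rmin d d1 / 2) ltac:(split; lra).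
have := Hd (Rmin d d1 / 2) ltac:(split; lra).
move=> h2 /Rabs_def2 [? ?]; lra.
Qed.

Definition pw (gamma a : R) := if Rlt_dec 0 a then Rpower a gamma else 0.

Lemma lim_press gamma (rho : R -> R) a : 0 < gamma -> Ev (fun e => 0 < rho e) -> Lim0 rho a ->
  Lim0 (fun e => press gamma (rho e)) (pw gamma a).
Proof.
move=> hg Hp Hr; have a0 := lim_nonneg Hp Hr; rewrite /pw.
case: Rlt_dec => ha.
  exact: (lim_cont (derivable_pt_lim_power a gamma ha) Hr).
rewrite /=; have a00 : a = 0 by lra.
move=> eta heta.
have hb : 0 < Rpower eta (/ gamma) by apply: exp_pos.
have [d1 [h1 H1]] := Hr _ hb.
have [d2 [h2 H2]] := Hp.
exists (Rmin d1 d2); split; first by apply Rmin_pos.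
move=> e he; have m1 := Rmin_l d1 d2; have m2 := Rmin_r d1 d2.
have p := H2 e ltac:(lra); have q := H1 e ltac:(lra).
rewrite a00 Rminus_0_r Rminus_0_r in q *.
rewrite Rabs_right in q; last by lra.
rewrite Rabs_right; last by apply Rle_ge, Rlt_le, exp_pos.
have := Rlt_Rpower_l (rho e) (Rpower eta (/ gamma)) gamma hg (conj p q).
rewrite Rpower_mult Rinv_l; last by lra.
by rewrite Rpower_1.
Qed.

Lemma lim_o2 (g : R -> R) a b c : Lim0 (fun e => (g e - a - e * b - e ^ 2 * c) / e ^ 2) 0 ->
  Lim0 g a /\ Lim0 (fun e => (g e - a) / e) b /\ Lim0 (fun e => (g e - a - e * b) / e ^ 2) c.
Proof.
move=> H; set r := fun e => _ in H.
have E : Ev (fun e => g e = a + e * b + e ^ 2 * c + e ^ 2 * r e).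
  apply Ev_true => e he; rewrite /r; field; lra.
split; [|split].
- apply: lim_ext.
  + apply: Ev_mono E => e _ E; symmetry; exact: E.
  + have := lim_plus (lim_plus (lim_plus (lim_const a) (lim_mult lim_id (lim_const b)))
      (lim_mult (lim_mult lim_id lim_id) (lim_const c))) (lim_mult (lim_mult lim_id lim_id) H).
    rewrite !Rmult_0_l !Rplus_0_r; apply: lim_ext; apply: Ev_true => e _; simpl; ring.
- have := lim_plus (lim_plus (lim_const b) (lim_mult lim_id (lim_const c))) (lim_mult lim_id H).
  rewrite !Rmult_0_l !Rplus_0_r; apply: lim_ext; apply: Ev_mono E => e he ->; simpl; field; lra.
- have := lim_plus (lim_const c) H.
  rewrite Rplus_0_r; apply: lim_ext; apply: Ev_mono E => e he ->; simpl; field; lra.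
Qed.

Definition C1lim {d} (F : R -> pt d -> R) (f : pt d -> R) x (i : 'I_d) :=
  Lim0 (fun e => F e x) (f x) /\ Ev (fun e => Dd i (F e) x (pd i (F e) x)) /\
  Lim0 (fun e => pd i (F e) x) (pd i f x) /\ Dd i f x (pd i f x).

Lemma C1lim_mult d (F G : R -> pt d -> R) f g x i : C1lim F f x i -> C1lim G g x i ->
  C1lim (fun e y => F e y * G e y) (fun y => f y * g y) x i.
Proof.
move=> [F1 [F2 [F3 F4]]] [G1 [G2 [G3 G4]]].
have Dfg := Dd_mult F4 G4.
split; [exact: lim_mult F1 G1|split; [|split]].
- apply: Ev_mono (Ev_and F2 G2) => e _ [h1 h2]; rewrite (pd_eq (Dd_mult h1 h2)).
  exact: Dd_mult h1 h2.
- rewrite (pd_eq Dfg).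
  apply: lim_ext (lim_plus (lim_mult F3 G1) (lim_mult F1 G3)).
  apply: Ev_mono (Ev_and F2 G2) => e _ [h1 h2]; by rewrite (pd_eq (Dd_mult h1 h2)).
- by rewrite (pd_eq Dfg).
Qed.

Lemma C1lim_ext d (F G : R -> pt d -> R) f x i : Ev (fun e => forall y, F e y = G e y) ->
  C1lim F f x i -> C1lim G f x i.
Proof.
move=> E [F1 [F2 [F3 F4]]]; split; [|split; [|split]] => //.
- apply: lim_ext F1; apply: Ev_mono E => e _ h; exact: h.
- apply: Ev_mono (Ev_and E F2) => e _ [h1 h2].
  rewrite -(pd_ext i x h1); exact: Dd_ext h1 h2.
- apply: lim_ext F3; apply: Ev_mono E => e _ h; exact: pd_ext.
Qed.

Lemma C1lim_const d (f : pt d -> R) x i : Dd i f x (pd i f x) -> C1lim (fun _ => f) f x i.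
Proof.
move=> h; split; [exact: lim_const|split; [exact: Ev_true|split=>//]]; exact: lim_const.
Qed.

Section Expand.
Variable d : nat.
Variables (F : R -> pt d -> R) (f0 f1 f2 : pt d -> R).
Hypothesis HF : expand2 F f0 f1 f2.

Definition Rem e y := F e y - f0 y - e * f1 y - e ^ 2 * f2 y.

Lemma exp_smooth : smooth_T f0 /\ smooth_T f1 /\ smooth_T f2.
Proof. by case: HF => [h0 [h1 [h2 _]]]. Qed.

Lemma rem_val x : Lim0 (fun e => Rem e x / e ^ 2) 0.
Proof.
case: HF => [_ [_ [_ S]]] eta heta.
have [e0 [he0 H]] := S (eta / 2) ltac:(lra).
exists e0; split=>// e he; have [_ H2] := H e he; have [H3 _] := H2 x.
rewrite Rminus_0_r /Rdiv Rabs_mult Rabs_inv.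
rewrite (Rabs_right (e ^ 2)); last by apply Rle_ge, pow_le; lra.
have he2 : 0 < e ^ 2 by apply pow_lt; lra.
apply (Rmult_lt_reg_r (e ^ 2)) => //; rewrite Rmult_assoc Rinv_l; last by lra.
rewrite /Rem Rmult_1_r; nra.
Qed.

Lemma rem_pd x i : Lim0 (fun e => pd i (Rem e) x / e ^ 2) 0.
Proof.
case: HF => [_ [_ [_ S]]] eta heta.
have [e0 [he0 H]] := S (eta / 2) ltac:(lra).
exists e0; split=>// e he; have [_ H2] := H e he; have [_ H3] := H2 x.
have H4 := H3 i.
rewrite Rminus_0_r /Rdiv Rabs_mult Rabs_inv.
rewrite (Rabs_right (e ^ 2)); last by apply Rle_ge, pow_le; lra.
have he2 : 0 < e ^ 2 by apply pow_lt; lra.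
apply (Rmult_lt_reg_r (e ^ 2)) => //; rewrite Rmult_assoc Rinv_l; last by lra.
rewrite /Rem Rmult_1_r; nra.
Qed.

Lemma rem_D x i : Ev (fun e => Dd i (Rem e) x (pd i (Rem e) x)).
Proof.
case: HF => [_ [_ [_ S]]].
have [e0 [he0 H]] := S 1 Rlt_0_1.
exists e0; split=>// e he; have [H1 _] := H e he.
apply: pd_spec; exact: (Ck_D H1).
Qed.

Lemma F_D x i : Ev (fun e => Dd i (F e) x
   (pd i f0 x + e * pd i f1 x + e ^ 2 * pd i f2 x + pd i (Rem e) x)).
Proof.
have [S0 [S1 S2]] := exp_smooth.
apply: Ev_mono (rem_D x i) => e _ h.
apply: (@Dd_ext _ _ (fun y => f0 y + e * f1 y + e ^ 2 * f2 y + Rem e y)).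
  by move=> y; rewrite /Rem; ring.
apply: Dd_plus h; apply: Dd_plus; [apply: Dd_plus|]; try apply: Dd_scal; exact: smooth_D.
Qed.

Lemma exp_val x : Lim0 (fun e => (F e x - f0 x - e * f1 x - e ^ 2 * f2 x) / e ^ 2) 0.
Proof. exact: rem_val. Qed.

Lemma exp_pd x i : Lim0 (fun e => (pd i (F e) x - pd i f0 x - e * pd i f1 x - e ^ 2 * pd i f2 x) / e ^ 2) 0.
Proof.
apply: lim_ext (rem_pd x i); apply: Ev_mono (F_D x i) => e he h.
rewrite (pd_eq h); rewrite /Rem; field; lra.
Qed.

Lemma exp_C1 x i : C1lim F f0 x i.
Proof.
have [S0 _] := exp_smooth.
split; first by have [] := lim_o2 (exp_val x).
split; first by apply: Ev_mono (F_D x i) => e _ h; rewrite (pd_eq h).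
split; first by have [] := lim_o2 (exp_pd x i).
exact: smooth_D.
Qed.
End Expand.

Lemma lim_big (I : Type) (r : seq I) (P : pred I) (G : I -> R -> R) (a : I -> R) :
  (forall j, Lim0 (G j) (a j)) ->
  Lim0 (fun e => \big[Rplus/0]_(j <- r | P j) G j e) (\big[Rplus/0]_(j <- r | P j) a j).
Proof.
move=> H; elim: r => [|x r IH].
  rewrite big_nil; apply: lim_ext (lim_const 0); apply: Ev_true => e _; by rewrite big_nil.
rewrite big_cons; case Px: (P x).
  apply: lim_ext (lim_plus (H x) IH); apply: Ev_true => e _; by rewrite big_cons Px.
apply: lim_ext IH; apply: Ev_true => e _; by rewrite big_cons Px.
Qed.

Lemma lim_div d (G : R -> pt d -> 'I_d -> R) (a : 'I_d -> R) x :
  (forall j, Lim0 (fun e => pd j (fun y => G e y j) x) (a j)) ->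
  Lim0 (fun e => div (G e) x) (\big[Rplus/0]_(j : 'I_d) a j).
Proof. move=> H; rewrite /div /sumI; exact: (lim_big _ _ H). Qed.

Lemma sumN_zero n F : (forall l, (l < n)%N -> F l = 0) -> sumN 0 n F = 0.
Proof.
move=> H; rewrite (sumN_ext H); elim: n {H} => [|n IH]; first by rewrite sumN_0.
by rewrite sumN_rec // IH; ring.
Qed.

Lemma tri s (A : nat -> nat -> R) (v : nat -> R) :
  (forall k, (k < s)%N -> sumN 0 k.+1 (fun l => A k l * v l) = 0) ->
  (forall k, (k < s)%N -> A k k <> 0 \/ v k = 0) -> forall k, (k < s)%N -> v k = 0.
Proof.
move=> H1 H2; elim/ltn_ind => k IH hk.
have Z : sumN 0 k (fun l => A k l * v l) = 0.
  apply: sumN_zero => l hl; rewrite IH //; [ring|exact: ltn_trans hl hk].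
have := H1 k hk; rewrite sumN_rec // Z Rplus_0_l => E.
case: (H2 k hk) => // hA; by apply: (Rmult_eq_reg_l (A k k)); rewrite ?Rmult_0_r.
Qed.

Lemma pw_inj gamma a b : 0 < gamma -> 0 <= a -> 0 <= b -> pw gamma a = pw gamma b -> a = b.
Proof.
move=> hg ha hb; rewrite /pw.
case: Rlt_dec => h1; case: Rlt_dec => h2 //=.
- rewrite /Rpower => /exp_inv E; apply: ln_inv => //.
  by apply: (Rmult_eq_reg_l gamma); lra.
- by move=> E; have := exp_pos (gamma * ln a); rewrite /Rpower in E; lra.
- by move=> E; have := exp_pos (gamma * ln b); rewrite /Rpower in E; lra.
- lra.
Qed.

Lemma pd_constfun d i (f : pt d -> R) x c : (forall y, f y = c) -> pd i f x = 0.
Proof. move=> H; rewrite (@pd_ext _ _ _ (fun _ => c)) //; exact: pd_eq (Dd_const _ _ _). Qed.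

Lemma orders (a b c m : R) (Rr M : R -> R) :
  Ev (fun e => a + e * b + e ^ 2 * c + Rr e = e ^ 2 * M e) ->
  Lim0 (fun e => Rr e / e ^ 2) 0 -> Lim0 M m -> a = 0 /\ b = 0 /\ c = m.
Proof.
move=> E HR HM.
have L : Lim0 (fun e => ((a + e * b + e ^ 2 * c + Rr e) - a - e * b - e ^ 2 * c) / e ^ 2) 0.
  apply: lim_ext HR; apply: Ev_true => e he; field; lra.
have [L0 [L1 L2]] := lim_o2 L.
have [L0' [L1' L2']] : Lim0 (fun e => a + e * b + e ^ 2 * c + Rr e) 0 /\
   Lim0 (fun e => (a + e * b + e ^ 2 * c + Rr e - 0) / e) 0 /\
   Lim0 (fun e => (a + e * b + e ^ 2 * c + Rr e - 0 - e * 0) / e ^ 2) m.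
  split; [|split].
  - have := lim_mult (lim_mult lim_id lim_id) HM; rewrite !Rmult_0_l.
    apply: lim_ext; apply: Ev_mono E => e _ ->; simpl; ring.
  - have := lim_mult lim_id HM; rewrite Rmult_0_l.
    apply: lim_ext; apply: Ev_mono E => e he ->; simpl; field; lra.
  - apply: lim_ext HM; apply: Ev_mono E => e he ->; simpl; field; lra.
have ha : a = 0 := lim_unique L0 L0'.
have hb : b = 0. 
  move: L1 L1'; rewrite ha => L1 L1'; exact: lim_unique L1 L1'.
split=>//; split=>//.
move: L2 L2'; rewrite ha hb => L2 L2'; exact: lim_unique L2 L2'.
Qed.

Lemma sumN_lin4 n (a X Y Z W : nat -> R) e :
  sumN 0 n (fun l => a l * (X l + e * Y l + e ^ 2 * Z l + e ^ 2 * W l)) =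
  sumN 0 n (fun l => a l * X l) + e * sumN 0 n (fun l => a l * Y l) +
  e ^ 2 * sumN 0 n (fun l => a l * Z l) + e ^ 2 * sumN 0 n (fun l => a l * W l).
Proof.
elim: n => [|n IH]; first by rewrite !sumN_0; ring.
rewrite !sumN_rec // IH; ring.
Qed.

Section Main.
Variables (d s : nat) (gamma dt : R) (At A : nat -> nat -> R) (wt w : nat -> R)
  (rhon0 rhon2 : pt d -> R) (un0 un1 : pt d -> 'I_d -> R)
  (rho : R -> nat -> pt d -> R) (q : R -> nat -> pt d -> 'I_d -> R)
  (rho0 rho1 rho2 : nat -> pt d -> R) (u0 u1 u2 : nat -> pt d -> 'I_d -> R)
  (p0 p1 p2 : nat -> pt d -> R).
Hypothesis Hg : 0 < gamma.
Hypothesis Hdt : 0 < dt.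
Hypothesis Hs : (1 <= s)%N.
Hypothesis HD : DIRK s At A.
Hypothesis HG : GSA s At A wt w.
Hypothesis HT : typeA s A \/ typeCK s A.
Hypothesis Hr0s : smooth_T rhon0.
Hypothesis Hr2s : smooth_T rhon2.
Hypothesis Hu0s : forall i, smooth_T (fun x => un0 x i).
Hypothesis Hu1s : forall i, smooth_T (fun x => un1 x i).
Hypothesis Hr0p : forall x, 0 < rhon0 x.
Hypothesis Hr0g : forall i x, pd i rhon0 x = 0.
Hypothesis Hdivn : forall x, div un0 x = 0.
Hypothesis Hex : exists e1, 0 < e1 /\ forall eps, 0 < eps < e1 -> forall k, (k < s)%N ->
     (forall x, 0 < rho eps k x) /\ periodic (rho eps k) /\
     (forall i, periodic (fun x => q eps k x i)) /\
     IMEX_stage gamma dt eps At A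
       (fun x => rhon0 x + eps ^ 2 * rhon2 x)
       (fun x i => (rhon0 x + eps ^ 2 * rhon2 x) * (un0 x i + eps * un1 x i))
       (rho eps) (q eps) k.
Hypothesis Hexp : forall k, (k < s)%N ->
     expand2 (fun e => rho e k) (rho0 k) (rho1 k) (rho2 k) /\
     (forall i, expand2 (fun e x => q e k x i / rho e k x)
                  (fun x => u0 k x i) (fun x => u1 k x i) (fun x => u2 k x i)) /\
     expand2 (fun e x => press gamma (rho e k x)) (p0 k) (p1 k) (p2 k).

Lemma Pos k : (k < s)%N -> Ev (fun e => forall x, 0 < rho e k x).
Proof. move=> hk; apply: Ev_mono Hex => e _ H; by have [] := H k hk. Qed.

Lemma DensE k : (k < s)%N -> Ev (fun e => forall x, rho e k x =
  rhon0 x + e ^ 2 * rhon2 x - dt * sumN 0 k.+1 (fun l => A k l * div (q e l) x)).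
Proof. move=> hk; apply: Ev_mono Hex => e _ H; by have [_ [_ [_ [H1 _]]]] := H k hk. Qed.

Lemma MomE k : (k < s)%N -> Ev (fun e => forall x i, q e k x i =
      (rhon0 x + e ^ 2 * rhon2 x) * (un0 x i + e * un1 x i)
      - dt * sumN 0 k (fun l => At k l *
               div (fun y j => q e l y i * q e l y j / rho e l y) x)
      - dt / e ^ 2 * sumN 0 k.+1 (fun l => A k l *
               pd i (fun y => press gamma (rho e l y)) x)).
Proof. move=> hk; apply: Ev_mono Hex => e _ H; by have [_ [_ [_ [_ H1]]]] := H k hk. Qed.

Lemma C1rho k x i : (k < s)%N -> C1lim (fun e => rho e k) (rho0 k) x i.
Proof. move=> hk; have H := exp_C1 (proj1 (Hexp hk)) x i. exact H. Qed.

Lemma lim_rho k x : (k < s)%N -> Lim0 (fun e => rho e k x) (rho0 k x).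
Proof. move=> hk; by have [] := lim_o2 (exp_val (proj1 (Hexp hk)) x). Qed.

Lemma C1u k j x i : (k < s)%N -> C1lim (fun e y => q e k y j / rho e k y) (fun y => u0 k y j) x i.
Proof. move=> hk; have H := exp_C1 (proj1 (proj2 (Hexp hk)) j) x i. exact H. Qed.

Lemma C1q k j x i : (k < s)%N -> C1lim (fun e y => q e k y j) (fun y => rho0 k y * u0 k y j) x i.
Proof.
move=> hk; apply: C1lim_ext (C1lim_mult (C1rho x i hk) (C1u j x i hk)).
apply: Ev_mono (Pos hk) => e _ P y; field; have := P y; lra.
Qed.

Lemma C1qq k i j x : (k < s)%N ->
  C1lim (fun e y => q e k y i * q e k y j / rho e k y)
        (fun y => rho0 k y * (u0 k y i * u0 k y j)) x j.
Proof.
move=> hk; apply: C1lim_ext (C1lim_mult (C1rho x j hk) (C1lim_mult (C1u i x j hk) (C1u j x j hk))).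
apply: Ev_mono (Pos hk) => e _ P y; field; have := P y; lra.
Qed.

Definition Dq l x := \big[Rplus/0]_(j : 'I_d) pd j (fun y => rho0 l y * u0 l y j) x.
Definition DQ l i x := \big[Rplus/0]_(j : 'I_d) pd j (fun y => rho0 l y * (u0 l y i * u0 l y j)) x.

Lemma lim_divq l x : (l < s)%N -> Lim0 (fun e => div (q e l) x) (Dq l x).
Proof. move=> hl; apply: lim_div => j; by have [_ [_ [H _]]] := C1q j x j hl. Qed.

Lemma lim_divqq l i x : (l < s)%N ->
  Lim0 (fun e => div (fun y j => q e l y i * q e l y j / rho e l y) x) (DQ l i x).
Proof. move=> hl; apply: lim_div => j; by have [_ [_ [H _]]] := C1qq i j x hl. Qed.

Lemma lim_rn x : Lim0 (fun e => rhon0 x + e ^ 2 * rhon2 x) (rhon0 x).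
Proof.
have := lim_plus (lim_const (rhon0 x)) (lim_mult (lim_mult lim_id lim_id) (lim_const (rhon2 x))).
rewrite !Rmult_0_l Rplus_0_r; apply: lim_ext; apply: Ev_true => e _; simpl; ring.
Qed.

Lemma dens_lim k x : (k < s)%N ->
  rho0 k x = rhon0 x - dt * sumN 0 k.+1 (fun l => A k l * Dq l x).
Proof.
move=> hk; apply: lim_unique (lim_rho x hk) _.
apply: lim_ext (lim_minus (lim_rn x) (lim_scal dt (lim_sumN (fun l hl => lim_scal (A k l) (lim_divq x (leq_trans hl hk)))))).
apply: Ev_mono (DensE hk) => e _ H; by rewrite H.
Qed.
Lemma lim_qn x i : Lim0 (fun e => (rhon0 x + e ^ 2 * rhon2 x) * (un0 x i + e * un1 x i)) (rhon0 x * un0 x i).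
Proof.
have := lim_mult (lim_rn x) (lim_plus (lim_const (un0 x i)) (lim_mult lim_id (lim_const (un1 x i)))).
by rewrite Rmult_0_l Rplus_0_r.
Qed.

Lemma mom k i x : (k < s)%N ->
  sumN 0 k.+1 (fun l => A k l * pd i (p0 l) x) = 0 /\
  sumN 0 k.+1 (fun l => A k l * pd i (p1 l) x) = 0 /\
  sumN 0 k.+1 (fun l => A k l * pd i (p2 l) x) =
   (rhon0 x * un0 x i - rho0 k x * u0 k x i - dt * sumN 0 k (fun l => At k l * DQ l i x)) / dt.
Proof.
move=> hk.
pose P l e := pd i (fun y => press gamma (rho e l y)) x.
pose r l e := (P l e - pd i (p0 l) x - e * pd i (p1 l) x - e ^ 2 * pd i (p2 l) x) / e ^ 2.
pose M e := ((rhon0 x + e ^ 2 * rhon2 x) * (un0 x i + e * un1 x i) - q e k x i - dt * sumN 0 k (fun l => At k l * div (fun y j => q e l y i * q e l y j / rho e l y) x)) / dt.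
apply: (@orders _ _ _ _ (fun e => e ^ 2 * sumN 0 k.+1 (fun l => A k l * r l e)) M).
- apply: Ev_mono (MomE hk) => e he H.
  rewrite -sumN_lin4.
  have -> : sumN 0 k.+1 (fun l => A k l * (pd i (p0 l) x + e * pd i (p1 l) x + e ^ 2 * pd i (p2 l) x + e ^ 2 * r l e)) =
            sumN 0 k.+1 (fun l => A k l * P l e).
    apply: sumN_ext => l _; rewrite /r; field; lra.
  rewrite /M (H x i) /P; field; lra.
- have L : forall l, (l < k.+1)%N -> Lim0 (fun e => A k l * r l e) (A k l * 0).
    move=> l hl; apply: lim_scal.
    have := exp_pd (proj2 (proj2 (Hexp (leq_trans hl hk)))) x i.
    by apply: lim_ext; apply: Ev_true => e he; rewrite /r /P.
  have L2 := lim_sumN L.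
  rewrite sumN_zero in L2; last by move=> l _; ring.
  apply: lim_ext L2; apply: Ev_true => e he; field; lra.
- have L : forall l, (l < k)%N -> Lim0 (fun e => At k l * div (fun y j => q e l y i * q e l y j / rho e l y) x) (At k l * DQ l i x).
    move=> l hl; apply: lim_scal; exact: lim_divqq (ltn_trans hl hk).
  have L2 := lim_sumN L.
  have L3 := (lim_mult (lim_minus (lim_minus (lim_qn x i) (proj1 (C1q i x i hk)))
     (lim_scal dt L2)) (lim_const (/ dt))).
  apply: lim_ext L3; apply: Ev_true => e he; rewrite /M; field; lra.
Qed.

Lemma rn_const x y : rhon0 x = rhon0 y.
Proof. apply: grad0_const => i z; rewrite -(Hr0g i z); exact: smooth_D. Qed.

Lemma lim_p k y : (k < s)%N -> Lim0 (fun e => press gamma (rho e k y)) (p0 k y).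
Proof. move=> hk; by have [] := lim_o2 (exp_val (proj2 (proj2 (Hexp hk))) y). Qed.

Lemma p0_pw k y : (k < s)%N -> p0 k y = pw gamma (rho0 k y).
Proof.
move=> hk; apply: lim_unique (lim_p y hk) _.
apply: lim_press => //; last exact: lim_rho.
apply: Ev_mono (Pos hk) => e _ H; exact: H.
Qed.

Lemma rho0_nonneg k y : (k < s)%N -> 0 <= rho0 k y.
Proof. move=> hk; apply: lim_nonneg (lim_rho y hk); apply: Ev_mono (Pos hk) => e _ H; exact: H. Qed.

Lemma ck_rho0e : typeCK s A -> Ev (fun e => forall y, rho e 0 y = rhon0 y + e ^ 2 * rhon2 y).
Proof.
move=> [_ [h0 _]]; apply: Ev_mono (DensE Hs) => e _ H y; rewrite H.
rewrite sumN_rec // sumN_0 h0 //; ring.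
Qed.

Lemma ck_q0e : typeCK s A -> Ev (fun e => forall y j, q e 0 y j =
   (rhon0 y + e ^ 2 * rhon2 y) * (un0 y j + e * un1 y j)).
Proof.
move=> [_ [h0 _]]; apply: Ev_mono (MomE Hs) => e _ H y j; rewrite H.
rewrite sumN_rec // !sumN_0 h0 //; ring.
Qed.

Lemma P0zero k i x : (k < s)%N -> pd i (p0 k) x = 0.
Proof.
move: k; apply: (tri (A := A) (v := fun l => pd i (p0 l) x)).
  by move=> k hk; have [] := mom i x hk.
move=> k hk; case: HT => [hA|[h2 [h0 hkk]]]; first by left; apply: hA.
case: k hk => [|k] hk; last by left; apply: hkk.
right; apply: (@pd_constfun _ _ _ _ (Rpower (rhon0 x) gamma)) => y.
rewrite (rn_const x y); apply: lim_unique (lim_p y hk) _.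
apply: lim_ext (lim_cont (derivable_pt_lim_power (rhon0 y) gamma (Hr0p y)) (lim_rn y)).
by apply: Ev_mono (ck_rho0e (conj h2 (conj h0 hkk))) => e _ H; rewrite /press H.
Qed.

Lemma rho0_const k x y : (k < s)%N -> rho0 k x = rho0 k y.
Proof.
move=> hk; have Sp := (exp_smooth (proj2 (proj2 (Hexp hk)))).1.
have C : p0 k x = p0 k y.
  apply: grad0_const => i z; rewrite -(P0zero i z hk); exact: smooth_D.
rewrite !p0_pw // in C; apply: pw_inj C => //; exact: rho0_nonneg.
Qed.

Lemma Dq_eq l x : (l < s)%N -> Dq l x = rho0 l x * div (u0 l) x.
Proof.
move=> hl; rewrite /Dq /div sumI_E -big_scal; apply: eq_bigr => j _.
have Sr := (exp_smooth (proj1 (Hexp hl))).1.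
have Su := (exp_smooth (proj1 (proj2 (Hexp hl)) j)).1.
rewrite (pd_eq (Dd_mult (smooth_D Sr j x) (smooth_D Su j x))).
rewrite (@pd_constfun _ _ _ _ (rho0 l x)); last by move=> y; apply: rho0_const.
ring.
Qed.

Lemma DQ_eq l i x : (l < s)%N -> DQ l i x = rho0 l x * div (fun y j => u0 l y i * u0 l y j) x.
Proof.
move=> hl; rewrite /DQ /div sumI_E -big_scal; apply: eq_bigr => j _.
have Sr := (exp_smooth (proj1 (Hexp hl))).1.
have Sui := (exp_smooth (proj1 (proj2 (Hexp hl)) i)).1.
have Suj := (exp_smooth (proj1 (proj2 (Hexp hl)) j)).1.
have D2 : Dd j (fun y => u0 l y i * u0 l y j) x (pd j (fun y => u0 l y i * u0 l y j) x).
  apply: pd_spec; eexists; exact: Dd_mult (smooth_D Sui j x) (smooth_D Suj j x).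
rewrite (pd_eq (Dd_mult (smooth_D Sr j x) D2)).
rewrite (@pd_constfun _ _ _ _ (rho0 l x)); last by move=> y; apply: rho0_const.
ring.
Qed.

Lemma u00 : typeCK s A -> forall y j, u0 0 y j = un0 y j.
Proof.
move=> hc y j.
have L := (lim_o2 (exp_val (proj1 (proj2 (Hexp Hs)) j) y)).1.
apply: lim_unique L _.
have := lim_plus (lim_const (un0 y j)) (lim_mult lim_id (lim_const (un1 y j))).
rewrite Rmult_0_l Rplus_0_r; apply: lim_ext.
apply: Ev_mono (Ev_and (ck_rho0e hc) (Ev_and (ck_q0e hc) (Pos Hs))) => e _ [H1 [H2 H3]].
have := H3 y; rewrite H1 H2 => h; field; lra.
Qed.

Lemma st3 k : (k < s)%N -> (forall x, rho0 k x = rhon0 x) /\ (forall x, div (u0 k) x = 0).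
Proof.
elim/ltn_ind: k => k IH hk.
have De : forall x, rho0 k x = rhon0 x - dt * (A k k * (rho0 k x * div (u0 k) x)).
  move=> x; rewrite {1}(dens_lim x hk) sumN_rec // sumN_zero; last first.
    move=> l hl; have hls := ltn_trans hl hk; rewrite Dq_eq //.
    by have [_ ->] := IH l hl hls; ring.
  by rewrite Dq_eq //; ring.
case: (Req_dec (A k k) 0) => hA.
  have k0 : k = 0%N.
    case: HT => [hT|[_ [_ hkk]]]; first by have := hT k hk.
    by case: k {IH De} hk hA => [|k] // hk hA; exfalso; exact: hkk k.+1 isT hk hA.
  have hc : typeCK s A.
    by case: HT => // hT; exfalso; have := hT k hk; rewrite hA.
  split=> x; first by rewrite De hA; ring.
  subst k; have -> : u0 0%N = un0.
    by apply: functional_extensionality => y; apply: functional_extensionality => j; apply: u00.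
  exact: Hdivn.
have nz : forall x, rho0 k x <> 0.
  move=> x hx; have := De x; rewrite hx; have := Hr0p x; nra.
have Dv : forall x, div (u0 k) x = (rhon0 x - rho0 k x) / (dt * A k k * rho0 k x).
  move=> x; have := De x; move=> h; field_simplify_eq; [nra | split; [apply: nz|split; lra]].
pose x0 : pt d := fun _ => 0.
have K : forall x, div (u0 k) x = div (u0 k) x0.
  by move=> x; rewrite !Dv (rn_const x x0) (rho0_const x x0 hk).
have K0 : div (u0 k) x0 = 0.
  apply: div_const K => j; exact: (exp_smooth (proj1 (proj2 (Hexp hk)) j)).1.
have Z : forall x, div (u0 k) x = 0 by move=> x; rewrite K.
split=> // x; by rewrite De Z; ring.
Qed.

Lemma p0_eq k x : (k < s)%N -> p0 k x = Rpower (rhon0 x) gamma.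
Proof.
move=> hk; rewrite p0_pw // (proj1 (st3 hk) x) /pw.
by case: Rlt_dec => // h; exfalso; apply: h; apply: Hr0p.
Qed.

Lemma p1_eq k x : (k < s)%N -> p1 k x = gamma * Rpower (rhon0 x) (gamma - 1) * rho1 k x.
Proof.
move=> hk.
have L1 := (proj1 (proj2 (lim_o2 (exp_val (proj2 (proj2 (Hexp hk))) x)))).
have Lr := (proj1 (proj2 (lim_o2 (exp_val (proj1 (Hexp hk)) x)))).
have L0 := lim_rho x hk.
rewrite (proj1 (st3 hk) x) in Lr L0.
rewrite p0_eq // in L1.
have LC := lim_chain (derivable_pt_lim_power (rhon0 x) gamma (Hr0p x)) L0 Lr.
exact: lim_unique L1 LC.
Qed.

Lemma rho10 : typeCK s A -> forall y, rho1 0 y = 0.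
Proof.
move=> hc y.
have Lr := (proj1 (proj2 (lim_o2 (exp_val (proj1 (Hexp Hs)) y)))).
rewrite (proj1 (st3 Hs) y) in Lr.
apply: lim_unique Lr _.
have := lim_mult lim_id (lim_const (rhon2 y)); rewrite Rmult_0_l; apply: lim_ext.
apply: Ev_mono (ck_rho0e hc) => e he H; rewrite H; simpl; field; lra.
Qed.

Lemma P1zero k i x : (k < s)%N -> pd i (p1 k) x = 0.
Proof.
move: k; apply: (tri (A := A) (v := fun l => pd i (p1 l) x)).
  by move=> k hk; have [_ []] := mom i x hk.
move=> k hk; case: HT => [hA|[h2 [h0 hkk]]]; first by left; apply: hA.
case: k hk => [|k] hk; last by left; apply: hkk.
right; apply: (@pd_constfun _ _ _ _ 0) => y.
by rewrite p1_eq // (rho10 (conj h2 (conj h0 hkk))); ring.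
Qed.

Lemma rho1_const k x y : (k < s)%N -> rho1 k x = rho1 k y.
Proof.
move=> hk; have Sp := (exp_smooth (proj2 (proj2 (Hexp hk)))).2.1.
have C : p1 k x = p1 k y.
  apply: grad0_const => i z; rewrite -(P1zero i z hk); exact: smooth_D.
rewrite !p1_eq // (rn_const y x) in C.
have hp : 0 < gamma * Rpower (rhon0 x) (gamma - 1) by apply: Rmult_lt_0_compat => //; apply: exp_pos.
apply: (Rmult_eq_reg_l (gamma * Rpower (rhon0 x) (gamma - 1))) => //; lra.
Qed.

Lemma final_formula x i :
  u0 (s - 1)%N x i =
     un0 x i
     - dt * sumN 0 s (fun k => wt k * div (fun y j => u0 k y i * u0 k y j) x)
     - dt / rhon0 x * sumN 0 s (fun k => w k * pd i (p2 k) x).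
Proof.
have Es : (s - 1).+1 = s by rewrite subn1 prednK.
have hk : (s - 1 < s)%N by rewrite -{2}Es.
have [_ [_ M2]] := mom i x hk.
rewrite Es in M2.
have E1 : sumN 0 s (fun l => A (s - 1)%N l * pd i (p2 l) x) = sumN 0 s (fun k => w k * pd i (p2 k) x).
  apply: sumN_ext => l hl; by rewrite (proj2 (HG hl)).
have E2 : sumN 0 (s - 1) (fun l => At (s - 1)%N l * DQ l i x) =
          rhon0 x * sumN 0 s (fun k => wt k * div (fun y j => u0 k y i * u0 k y j) x).
  have ES : forall F, sumN 0 s F = sumN 0 (s - 1) F + F (s - 1)%N.
    by move=> F; rewrite -sumN_rec // Es.
  rewrite ES.
  have -> : wt (s - 1)%N = 0.
    rewrite -(proj1 (HG hk)); exact: (proj1 (HD hk hk) (leqnn _)).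
  rewrite Rmult_0_l Rplus_0_r -sumN_scal; apply: sumN_ext => l hl.
  have hls : (l < s)%N by apply: ltn_trans hl hk.
  rewrite (proj1 (HG hls)) DQ_eq // (proj1 (st3 hls) x); ring.
rewrite E1 E2 (proj1 (st3 hk) x) in M2.
rewrite M2; field; split; [lra | have := Hr0p x; lra].
Qed.

Lemma main_final :
  (forall k, (k < s)%N ->
     (forall x, rho0 k x = rhon0 x) /\
     (forall x y, rho1 k x = rho1 k y) /\
     (forall x, div (u0 k) x = 0)) /\
  (forall x, rho0 (s - 1)%N x = rhon0 x) /\
  (forall x y, rho0 (s - 1)%N x = rho0 (s - 1)%N y) /\
  (forall x, div (u0 (s - 1)%N) x = 0) /\
  (forall x i, u0 (s - 1)%N x i =
     un0 x i
     - dt * sumN 0 s (fun k => wt k * div (fun y j => u0 k y i * u0 k y j) x)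
     - dt / rhon0 x * sumN 0 s (fun k => w k * pd i (p2 k) x)).
Proof.
have hk : (s - 1 < s)%N by rewrite subn1 prednK.
split.
  move=> k hk'; split; first exact: (proj1 (st3 hk')).
  split; last exact: (proj2 (st3 hk')).
  by move=> x y; apply: rho1_const.
split; first exact: (proj1 (st3 hk)).
split; first by move=> x y; apply: rho0_const.
split; first exact: (proj2 (st3 hk)).
exact: final_formula.
Qed.

End Main.


Unset Implicit Arguments.

Theorem mainTheorem1 (d s : nat) (gamma dt : R)
  (At A : nat -> nat -> R) (wt w : nat -> R)
  (rhon0 rhon2 : pt d -> R) (un0 un1 : pt d -> 'I_d -> R)
  (rho : R -> nat -> pt d -> R) (q : R -> nat -> pt d -> 'I_d -> R)
  (rho0 rho1 rho2 : nat -> pt d -> R) (u0 u1 u2 : nat -> pt d -> 'I_d -> R)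
  (p0 p1 p2 : nat -> pt d -> R) :
  0 < gamma -> 0 < dt -> (1 <= s)%N ->
  DIRK s At A -> GSA s At A wt w -> (typeA s A \/ typeCK s A) ->
  (* well-prepared data at t^n *)
  smooth_T rhon0 -> smooth_T rhon2 ->
  (forall i, smooth_T (fun x => un0 x i)) -> (forall i, smooth_T (fun x => un1 x i)) ->
  (forall x, 0 < rhon0 x) -> (forall i x, pd i rhon0 x = 0) -> (forall x, div un0 x = 0) ->
  (* for all sufficiently small eps the stages exist, are positive, solve the scheme *)
  (exists e1, 0 < e1 /\ forall eps, 0 < eps < e1 -> forall k, (k < s)%N ->
     (forall x, 0 < rho eps k x) /\ periodic (rho eps k) /\
     (forall i, periodic (fun x => q eps k x i)) /\
     IMEX_stage gamma dt eps At A
       (fun x => rhon0 x + eps ^ 2 * rhon2 x)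
       (fun x i => (rhon0 x + eps ^ 2 * rhon2 x) * (un0 x i + eps * un1 x i))
       (rho eps) (q eps) k) ->
  (* asymptotic expansions of the stage values (and of p(rho^k)) *)
  (forall k, (k < s)%N ->
     expand2 (fun e => rho e k) (rho0 k) (rho1 k) (rho2 k) /\
     (forall i, expand2 (fun e x => q e k x i / rho e k x)
                  (fun x => u0 k x i) (fun x => u1 k x i) (fun x => u2 k x i)) /\
     expand2 (fun e x => press gamma (rho e k x)) (p0 k) (p1 k) (p2 k)) ->
  (forall k, (k < s)%N ->
     (forall x, rho0 k x = rhon0 x) /\
     (forall x y, rho1 k x = rho1 k y) /\
     (forall x, div (u0 k) x = 0)) /\
  (forall x, rho0 (s - 1)%N x = rhon0 x) /\
  (forall x y, rho0 (s - 1)%N x = rho0 (s - 1)%N y) /\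
  (forall x, div (u0 (s - 1)%N) x = 0) /\
  (forall x i, u0 (s - 1)%N x i =
     un0 x i
     - dt * sumN 0 s (fun k => wt k * div (fun y j => u0 k y i * u0 k y j) x)
     - dt / rhon0 x * sumN 0 s (fun k => w k * pd i (p2 k) x)).
Proof.
move=> H1 H2 H3 H4 H5 H6 H7 H8 H9 H10 H11 H12 H13 H14 H15.
exact: (main_final H1 H2 H3 H4 H5 H6 H7 H11 H12 H13 H14 H15).
Qed.
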